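(* Let $A$ be an integral domain such that $\operatorname{Sper}A=\emptyset$ (equivalently, there is no ring homomorphism from $A$ to a real closed field; equivalently, $-1$ is a sum of squares in $A$). Let $K$ be the fraction field of $A$, $\bar K$ an algebraic closure and $\bar A$ the integral closure of $A$ in $\bar K$. Then every $\theta\in\bar A$ is an eigenvalue of some symmetric matrix $M\in\operatorname{Sym}_r(A)$ for a suitable $r$.
   Context: $\operatorname{Sper}A$ is the real spectrum of $A$: the set of pairs $(\mathfrak p,P)$ with $\mathfrak p$ a prime ideal of $A$ and $P$ an ordering of the residue field $\kappa(\mathfrak p)$. $\operatorname{Sym}_r(A)$ is the set of symmetric $r\times r$ matrices over $A$; an eigenvalue of $M$ is a root of $\det(X\cdot \mathrm{I}_r-M)$ in $\bar K$. *)

(* Defs.v *)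
From HB Require Import structures.
From mathcomp Require Import all_boot all_order all_algebra.
Set Implicit Arguments. Unset Strict Implicit. Unset Printing Implicit Defensive.
Import Order.TTheory GRing.Theory Num.Theory.
Local Open Scope ring_scope.

(* Sper A = emptyset, in the equivalent form given in the statement:
   -1 is a sum of squares in A. *)
Definition neg1_sum_of_squares (A : idomainType) : Prop :=
  exists s : seq A, - 1 = \sum_(a <- s) a ^+ 2.

Definition to_frac (A : idomainType) : A -> {fraction A} := @FracField.tofrac A.

Definition symmetric_mx (A : idomainType) (r : nat) (M : 'M[A]_r) : Prop :=
  M^T = M.

Definition is_eigenvalue (A L : idomainType) (f : A -> L) (r : nat)
  (M : 'M[A]_r) (theta : L) : Prop :=
  root (map_poly f (char_poly M)) theta.

(* Main.v *)
Require Import Defs.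
From HB Require Import structures.
From mathcomp Require Import all_boot all_order all_algebra ring.
Import GRing.Theory.
Local Open Scope ring_scope.

Section Main.
Variables (A : idomainType) (K : fieldType) (f : {rmorphism A -> K}).
Variables (s : seq A) (hs : -1 = \sum_(a <- s) a ^+ 2).
Variables (n : nat) (C : 'M[A]_n) (theta : K) (v : 'rV[K]_n).
Hypotheses (hv : v *m map_mx f C = theta *: v) (vnz : v != 0).

Let m := size s.
Let T : finType := ('I_m.+1 * 'I_n)%type.
Let a (b : 'I_m.+1) : A := s`_(b.-1).

Definition F (x y : T) : A :=
  let: (b, i) := x in let: (b', j) := y in
  if b == 0 then (if b' == 0 then 0 else - a b' * C j i)
  else if b' == 0 then - a b * C i j
  else if b == b' then C i j + C j i else 0.

Definition Mx : 'M[A]_#|T| := \matrix_(i, j) F (enum_val i) (enum_val j).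

Lemma F_sym x y : F x y = F y x.
Proof.
move: x y => [b i] [b' j] /=; rewrite /F [b' == b]eq_sym.
by case: (b == 0); case: (b' == 0); case: (b == b'); rewrite // addrC.
Qed.

Lemma Mx_sym : symmetric_mx Mx.
Proof. by apply/matrixP => i j; rewrite !mxE F_sym. Qed.


Definition G (x : T) : K := let: (b, i) := x in
  if b == 0 then v 0 i else f (a b) * v 0 i.

Lemma hv' i : \sum_j v 0 j * f (C j i) = theta * v 0 i.
Proof.
have := congr1 (fun w : 'rV[K]_n => w 0 i) hv; rewrite !mxE => <-.
by apply: eq_bigr => j _; rewrite mxE.
Qed.

Lemma hs' : \sum_(k < m) f (a (lift ord0 k)) ^+ 2 = -1.
Proof.
rewrite -(rmorphN1 f) hs rmorph_sum (big_nth 0) big_mkord.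
by apply: eq_bigr => k _; rewrite rmorphXn.
Qed.

Lemma key u : \sum_x G x * f (F x u) = theta * G u.
Proof.
transitivity (\sum_(p : T) G (p.1, p.2) * f (F (p.1, p.2) u)).
  by apply: eq_bigr => -[].
rewrite -(pair_bigA _ (fun b j => G (b, j) * f (F (b, j) u))) /= big_ord_recl /=.
case: u => c i.
case: (unliftP ord0 c) => [k0|] ->.
  have h0 : (lift ord0 k0 == 0 :> 'I_m.+1) = false by [].
  rewrite /G h0 [X in _ + X](bigD1 k0) //= eqxx.
  rewrite [X in _ + (_ + X)]big1 => [|k hk]; last first.
    by apply: big1 => j _; rewrite (inj_eq lift_inj) (negbTE hk) rmorph0 mulr0.
  rewrite addr0 -big_split /=.
  rewrite (eq_bigr (fun j => f (a (lift ord0 k0)) * (v 0 j * f (C j i)))); last first.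
    by move=> j _; rewrite rmorphD !rmorphM rmorphN; ring.
  by rewrite -mulr_sumr hv'; ring.
have h0 : (ord0 == 0 :> 'I_m.+1) = true by [].
rewrite /G h0 big1 => [|j _]; last by rewrite rmorph0 mulr0.
rewrite add0r.
rewrite (eq_bigr (fun k => - f (a (lift ord0 k)) ^+ 2 * \sum_j (v 0 j * f (C j i)))); last first.
  move=> k _; rewrite mulr_sumr; apply: eq_bigr => j _.
  by rewrite rmorphM rmorphN; ring.
by rewrite -mulr_suml sumrN hs' hv'; ring.
Qed.

Lemma main_ex : exists r (M : 'M[A]_r), symmetric_mx M /\ is_eigenvalue f M theta.
Proof.
exists #|T|, Mx; split; first exact: Mx_sym.
rewrite /is_eigenvalue map_char_poly -eigenvalue_root_char.
apply/eigenvalueP; exists (\row_k G (enum_val k)).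
  apply/rowP => k; rewrite !mxE.
  under eq_bigr do rewrite !mxE.
  rewrite -(big_enum_val (fun x => G x * f (F x (enum_val k)))).
  exact: key.
apply/eqP => h; move/eqP: vnz; apply; apply/rowP => i.
have := congr1 (fun w : 'rV[K]_#|T| => w 0 (enum_rank ((ord0 : 'I_m.+1), i))) h.
by rewrite !mxE enum_rankK /=.
Qed.

End Main.

Theorem corollary4p4 (A : idomainType) (hA : neg1_sum_of_squares A)
  (Kbar : closedFieldType) (iota : {rmorphism {fraction A} -> Kbar})
  (hKbar : forall x : Kbar, algebraicOver iota x)
  (theta : Kbar) (htheta : integralOver (iota \o @to_frac A) theta) :
  exists (r : nat) (M : 'M[A]_r),
    symmetric_mx M /\ is_eigenvalue (iota \o @to_frac A) M theta.
Proof.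
pose f : {rmorphism A -> Kbar} := iota \o (@FracField.tofrac A).
case: hA => s hs.
case: htheta => p pmon proot.
have hC : eigenvalue (map_mx f (companionmx p)) theta.
  by rewrite eigenvalue_root_char -map_char_poly companionmxK.
case/eigenvalueP: hC => v hv vnz.
exact: (@main_ex A Kbar f s hs _ (companionmx p) theta v hv vnz).
Qed.
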